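(* For real $J_1,J_2,J_3$, the vertex model on the periodic honeycomb lattice with the signature $$(r(000),\dots,r(111))=\big(e^{2(J_1+J_2+J_3)},e^{2J_3},e^{2J_2},e^{2J_1},e^{2J_1},e^{2J_2},e^{2J_3},e^{2(J_1+J_2+J_3)}\big)$$ at every vertex is orthogonally realizable.
   Context: Signatures are indexed by local configurations $000,001,\dots,111$ of the incident $(a,b,c)$-edges. A realization assigns to each edge an invertible $2\times2$ matrix $T_e$ and to each vertex a matchgate signature $m_v$ with $m_v=(T_a\otimes T_b\otimes T_c)r_v$ at black and $m_v=((T_a\otimes T_b\otimes T_c)^t)^{-1}r_v$ at white vertices, each $m_v$ satisfying the parity constraint (vanishing on all binary strings of one parity); the model is orthogonally realizable if a realization exists with all $T_e$ orthogonal. *)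

(* Defs.v *)
From Stdlib Require Import Reals Arith Bool.
Open Scope R_scope.

(* A 2x2 real matrix, entries indexed by bits (false = 0, true = 1). *)
Definition mat2 := bool -> bool -> R.
(* A signature on a degree-3 vertex: r x_a x_b x_c, i.e. r(x_a x_b x_c). *)
Definition sig3 := bool -> bool -> bool -> R.

Definition bsum (f : bool -> R) : R := f false + f true.

Definition tensor3 (A B C : mat2) (r : sig3) : sig3 :=
  fun x y z => bsum (fun u => bsum (fun v => bsum (fun w =>
    A x u * B y v * C z w * r u v w))).

Definition det2 (A : mat2) : R :=
  A false false * A true true - A false true * A true false.

Definition invertible2 (A : mat2) : Prop := det2 A <> 0.

(* (A^t)^{-1}, written out for 2x2 matrices. Since
   ((A (x) B (x) C)^t)^{-1} = (A^t)^{-1} (x) (B^t)^{-1} (x) (C^t)^{-1},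
   this gives the white-vertex transformation. *)
Definition inv_transpose2 (A : mat2) : mat2 :=
  fun i j => (if Bool.eqb i j then A (negb i) (negb j)
              else - A (negb i) (negb j)) / det2 A.

Definition orthogonal2 (A : mat2) : Prop :=
  forall i j, bsum (fun k => A k i * A k j) = if Bool.eqb i j then 1 else 0.

Definition parity_ok (s : sig3) : Prop :=
  exists p : bool, forall x y z, xorb (xorb x y) z = p -> s x y z = 0.

(* Periodic honeycomb lattice with m x n fundamental cells (on a torus).
   Black vertices B(i,j), white vertices W(i,j), 0 <= i < m, 0 <= j < n.
   Edges: a(i,j) = B(i,j)--W(i,j), b(i,j) = B(i,j)--W(i+1,j),
          c(i,j) = B(i,j)--W(i,j+1)   (indices mod m, mod n).
   So B(i,j) has incident edges a(i,j), b(i,j), c(i,j) and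
   W(i,j) has incident edges a(i,j), b(i-1,j), c(i,j-1). *)
Definition prevmod (m i : nat) : nat := ((i + (m - 1)) mod m)%nat.

(* Ta i j, Tb i j, Tc i j are the matrices on edges a(i,j), b(i,j), c(i,j);
   rB i j / rW i j are the signatures at B(i,j) / W(i,j). *)
Definition realization (m n : nat) (rB rW : nat -> nat -> sig3)
  (Ta Tb Tc : nat -> nat -> mat2) : Prop :=
  (forall i j, (i < m)%nat -> (j < n)%nat ->
     invertible2 (Ta i j) /\ invertible2 (Tb i j) /\ invertible2 (Tc i j)) /\
  (forall i j, (i < m)%nat -> (j < n)%nat ->
     parity_ok (tensor3 (Ta i j) (Tb i j) (Tc i j) (rB i j))) /\
  (forall i j, (i < m)%nat -> (j < n)%nat ->
     parity_ok (tensor3 (inv_transpose2 (Ta i j))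
                        (inv_transpose2 (Tb (prevmod m i) j))
                        (inv_transpose2 (Tc i (prevmod n j))) (rW i j))).

Definition orthogonally_realizable (m n : nat) (rB rW : nat -> nat -> sig3) : Prop :=
  exists Ta Tb Tc : nat -> nat -> mat2,
    realization m n rB rW Ta Tb Tc /\
    (forall i j, (i < m)%nat -> (j < n)%nat ->
       orthogonal2 (Ta i j) /\ orthogonal2 (Tb i j) /\ orthogonal2 (Tc i j)).

Definition ising_sig (J1 J2 J3 : R) : sig3 :=
  fun x y z =>
    match x, y, z with
    | false, false, false => exp (2 * (J1 + J2 + J3))
    | false, false, true  => exp (2 * J3)
    | false, true,  false => exp (2 * J2)
    | false, true,  true  => exp (2 * J1)
    | true,  false, false => exp (2 * J1)
    | true,  false, true  => exp (2 * J2)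
    | true,  true,  false => exp (2 * J3)
    | true,  true,  true  => exp (2 * (J1 + J2 + J3))
    end.

(* Main.v *)
Require Import Defs.
From Stdlib Require Import Reals Arith Bool Lra.
Open Scope R_scope.

Definition shape (a : R) : mat2 := fun i j => if andb i j then - a else a.

Lemma shape_par (a : R) (r : sig3) :
  (forall x y z, r x y z = r (negb x) (negb y) (negb z)) ->
  parity_ok (tensor3 (shape a) (shape a) (shape a) r).
Proof.
  intro Hs. exists true. intros x y z _H.
  destruct x, y, z; simpl in _H; try discriminate;
  unfold tensor3, bsum, shape; simpl;
  rewrite (Hs true true true), (Hs true true false), (Hs true false true),
    (Hs false true true); simpl; ring.
Qed.

Definition s2 : R := / sqrt 2.
Definition H : mat2 := shape s2.

Lemma s2sq : s2 * s2 = / 2.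
Proof.
  unfold s2. rewrite <- Rinv_mult, sqrt_sqrt; lra.
Qed.

Lemma H_orth : orthogonal2 H.
Proof.
  intros i j; destruct i, j; unfold bsum, H, shape; simpl;
  generalize s2sq; intro; lra.
Qed.

Lemma H_inv : invertible2 H.
Proof.
  unfold invertible2, det2, H, shape; simpl. generalize s2sq; intro. lra.
Qed.


Lemma white_par (r : sig3) :
  (forall x y z, r x y z = r (negb x) (negb y) (negb z)) ->
  parity_ok (tensor3 (inv_transpose2 H) (inv_transpose2 H) (inv_transpose2 H) r).
Proof.
  intro Hs. exists true. intros x y z _H.
  destruct x, y, z; simpl in _H; try discriminate;
  unfold tensor3, bsum, inv_transpose2, H, shape; simpl;
  rewrite (Hs true true true), (Hs true true false), (Hs true false true),
    (Hs false true true); simpl; unfold Rdiv; ring.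
Qed.

Lemma ising_sym J1 J2 J3 : forall x y z,
  ising_sig J1 J2 J3 x y z = ising_sig J1 J2 J3 (negb x) (negb y) (negb z).
Proof. intros x y z; destruct x, y, z; reflexivity. Qed.

Theorem mainTheorem17 (J1 J2 J3 : R) (m n : nat) (hm : (0 < m)%nat) (hn : (0 < n)%nat) :
  orthogonally_realizable m n (fun _ _ => ising_sig J1 J2 J3) (fun _ _ => ising_sig J1 J2 J3).
Proof.
  exists (fun _ _ => H), (fun _ _ => H), (fun _ _ => H).
  split; [split; [|split]|].
  - intros; repeat split; apply H_inv.
  - intros; apply shape_par, ising_sym.
  - intros; apply white_par, ising_sym.
  - intros; repeat split; apply H_orth.
Qed.
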